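(* Let $e\ge 3$, let $y\in[1,e-1]$ be rational with denominator $z>1$, and $i\in\mathbb Z/e\mathbb Z$. Suppose a partition $\lambda$ has a removable $i$-node $(r,c)$ and an addable $i$-node $(s,d)$ with $\mathrm{dep}(s,d)-e<\mathrm{dep}(r,c)<\mathrm{dep}(s,d)$. Then $\lambda$ has a $y$-bad hook.
   Context: Nodes are elements $(r,c)$ of $\mathbb N^2$ (row, column); the residue of $(r,c)\in\mathbb Z^2$ is $c-r+e\mathbb Z$ and an $i$-node is a node of residue $i$. A removable node of $\lambda$ is a node $(r,\lambda_r)$ with $\lambda_r>\lambda_{r+1}$; an addable node is a node not in $\lambda$ whose addition gives a partition. The depth of $(r,c)\in\mathbb Z^2$ is $\mathrm{dep}(r,c)=yr+(e-y)c$. The hook of $\lambda$ at $(r,c)$ has length $\lambda_r-c+\lambda'_c-r+1$ and arm length $\lambda_r-c$. A hook is $y$-bad if it has length $te$ and arm length $\lfloor yt\rfloor$ for some positive integer $t$ not divisible by $z$. *)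

(* Defs.v *)
From mathcomp Require Import all_boot all_order all_algebra.
Set Implicit Arguments. Unset Strict Implicit. Unset Printing Implicit Defensive.
Import Order.TTheory GRing.Theory Num.Theory.

(* Partitions are finite nonincreasing sequences of positive integers.
   Rows and columns are numbered from 1: row r has length part_row la r
   (= 0 for rows beyond the partition). *)
Definition is_partition (la : seq nat) : bool :=
  sorted geq la && (0 \notin la).

Definition part_row (la : seq nat) (r : nat) : nat := nth 0 la r.-1.

Definition part_col (la : seq nat) (c : nat) : nat :=
  count (fun x => c <= x) la.

Definition in_part (la : seq nat) (r c : nat) : bool :=
  [&& 1 <= r, 1 <= c & c <= part_row la r].

Definition young_set (S : nat -> nat -> bool) : Prop :=
  forall a b, S a b ->
    [/\ 1 <= a, 1 <= b, (1 < a -> S a.-1 b) & (1 < b -> S a b.-1)].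

Definition removable (la : seq nat) (r c : nat) : Prop :=
  1 <= r /\ c = part_row la r /\ part_row la r > part_row la r.+1.

Definition addable (la : seq nat) (s d : nat) : Prop :=
  1 <= s /\ 1 <= d /\ ~~ in_part la s d /\
  young_set (fun a b => in_part la a b || ((a == s) && (b == d))).

Definition is_res (e : nat) (i : int) (r c : nat) : Prop :=
  ((Posz c - Posz r)%R = i %[mod Posz e])%Z.

Definition dep (e : nat) (y : rat) (r c : nat) : rat :=
  (y * r%:R + (e%:R - y) * c%:R)%R.

Definition hook_length (la : seq nat) (r c : nat) : nat :=
  part_row la r - c + part_col la c - r + 1.

Definition arm_length (la : seq nat) (r c : nat) : nat :=
  part_row la r - c.

Definition y_bad_hook (e : nat) (y : rat) (la : seq nat) (r c : nat) : Prop :=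
  in_part la r c /\
  exists t : nat, 0 < t /\ ~~ ((denq y) %| Posz t)%Z /\
    hook_length la r c = t * e /\
    Posz (arm_length la r c) = Num.floor (y * t%:R)%R.

Definition has_y_bad_hook (e : nat) (y : rat) (la : seq nat) : Prop :=
  exists r c, y_bad_hook e y la r c.

(* Main.v *)
Require Import Defs.
From mathcomp Require Import all_boot all_order all_algebra.
From mathcomp Require Import zify ring lra.
Import Order.TTheory GRing.Theory Num.Theory.

Lemma count0 (c : nat) (l : seq nat) : all (fun x => x < c) l ->
  count (fun x => c <= x) l = 0.
Proof. elim: l => //= x l IH /andP[hx hl]; by rewrite IH // leqNgt hx. Qed.

Lemma geq_trans : transitive geq.
Proof. move=> a b c h1 h2; exact: leq_trans h2 h1. Qed.

Lemma col_count (la : seq nat) (c r : nat) : sorted geq la -> 0 < r ->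
  c <= nth 0 la r.-1 -> nth 0 la r < c -> count (fun x => c <= x) la = r.
Proof.
elim: la r => [|x l IH] r Hs Hr H1 H2; first by rewrite !nth_nil in H1 H2; lia.
have Hall : all (geq x) l := order_path_min geq_trans Hs.
have Hsl : sorted geq l := path_sorted Hs.
case: r Hr H1 H2 => [//|[|r']] _ /= H1 H2.
- rewrite H1 count0 //.
  clear IH Hs; case: l Hall Hsl H2 => [//|y l'] /= _ Hsl H2.
  rewrite H2 /=; apply/allP => z hz.
  have := allP (order_path_min geq_trans Hsl) z hz; rewrite /= => hzy.
  exact: leq_ltn_trans hzy H2.
- have Hc : c <= x.
    case: (ltnP r' (size l)) => hr.
      by apply: leq_trans H1 _; exact: (all_nthP 0 Hall).
    by move: H1 H2; rewrite nth_default //; lia.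
  rewrite Hc (IH r'.+1) //.
Qed.

Local Open Scope ring_scope.
Lemma floor_eq (x : rat) (n : int) : n%:~R <= x -> x < (n + 1)%:~R ->
  Num.floor x = n.
Proof.
move=> h1 h2; apply/eqP; rewrite eq_le floor_ge_int h1 andbT.
by rewrite -ltzD1 floor_lt_int.
Qed.

Theorem mainTheorem4 (e : nat) (y : rat) (i : int) (la : seq nat) (r c s d : nat) :
  (3 <= e)%N ->
  1 <= y -> y <= e%:R - 1 ->
  (1 < denq y)%R ->
  is_partition la ->
  removable la r c -> is_res e i r c ->
  addable la s d -> is_res e i s d ->
  dep e y s d - e%:R < dep e y r c -> dep e y r c < dep e y s d ->
  has_y_bad_hook e y la.
Proof.
move=> He Hy1 Hye Hz /andP[Hsort H0] [Hr1 [Hc Hrc]] Hres1 [Hs1 [Hd1 [Hnin Hyoung]]] Hres2 Hdep1 Hdep2.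
have hsrow : (part_row la s < d)%N.
  by move: Hnin; rewrite /in_part Hs1 Hd1 /= ltnNge.
have hyd : (1 < d)%N -> (d.-1 <= part_row la s)%N.
  move=> hd; have [_ _ _ H4] := Hyoung s d (introT orP (or_intror (introT andP (conj (eqxx s) (eqxx d))))).
  have := H4 hd; case: d hd {Hnin Hyoung Hd1 hsrow Hres2 Hdep1 Hdep2 H4} => [|d'] //= hd.
  by case/orP => [/and3P[_ _ h]|/andP[_ /eqP h]] //; lia.
have hys : (1 < s)%N -> (d <= part_row la s.-1)%N.
  move=> hs; have [_ _ H3 _] := Hyoung s d (introT orP (or_intror (introT andP (conj (eqxx s) (eqxx d))))).
  have := H3 hs; case: s hs {hyd Hnin Hyoung Hs1 hsrow Hres2 Hdep1 Hdep2 H3} => [|s'] //= hs.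
  by case/orP => [/and3P[_ _ h]|/andP[/eqP h _]] //; lia.
have : (e%:Z %| (Posz d - Posz s) - (Posz c - Posz r))%Z.
  by rewrite -eqz_mod_dvd; apply/eqP; rewrite Hres2 Hres1.
case/dvdzP => K HK.
set A : int := Posz s - Posz r.
set B : int := Posz d - Posz c.
have HB : B = A + K * e%:Z by rewrite -HK /A /B; ring.
have hs : (s%:R : rat) = r%:R + A%:~R by rewrite /A intrB /=; ring.
have hd : (d%:R : rat) = c%:R + B%:~R by rewrite /B intrB /=; ring.
have hBA : (B%:~R : rat) = A%:~R + K%:~R * e%:R by rewrite HB intrD intrM.
have key : dep e y s d - dep e y r c = e%:R * (A%:~R + (e%:R - y) * K%:~R).
  by rewrite /dep hs hd hBA; ring.
have e0 : (0 : rat) < e%:R by rewrite ltr0n; clear -He; lia.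
have hX0 : 0 < A%:~R + (e%:R - y) * K%:~R.
  by rewrite -(pmulr_rgt0 _ e0) -key subr_gt0.
have hX1 : A%:~R + (e%:R - y) * K%:~R < 1.
  by rewrite -(ltr_pM2l e0) mulr1 -key ltrBlDr addrC -ltrBlDr.

have hey : 1 <= e%:R - y by lra.
have hc1 : (1 <= c)%N by rewrite Hc; exact: (leq_ltn_trans (leq0n _) Hrc).
case: K HK HB hBA hX0 hX1 key => [[|t]|t] HK HB hBA hX0 hX1 key.
- exfalso; rewrite mulr0 addr0 ltr0z in hX0; rewrite mulr0 addr0 ltrz1 in hX1; clear -hX0 hX1; lia.
- have hK : (Posz t.+1)%:~R = (t.+1%:R : rat) by [].
  rewrite hK in hBA hX0 hX1.
  have ht1 : (1:rat) <= t.+1%:R by rewrite ler1n.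
  have hp : 1 <= (e%:R - y) * t.+1%:R by nra.
  have hA : A%:~R < (0:rat) by lra.
  rewrite ltrz0 in hA.
  have hyt : 1 <= y * t.+1%:R by nra.
  have hB1: y * t.+1%:R < B%:~R by rewrite hBA; lra.
  have hB2: B%:~R < y * t.+1%:R + 1 by rewrite hBA; lra.
  have hB0 : 0 < B by rewrite -(ltr0z rat); lra.
  have hfl : Num.floor (y * t.+1%:R) = B - 1.
    by apply: floor_eq; [rewrite intrB ?mulr1z | rewrite subrK]; lra.
  have hnd : ~~ (denq y %| Posz t.+1)%Z.
    apply/negP => /dvdzP [q hq].
    have hy' : y * t.+1%:R = (q * numq y)%:~R.
      by rewrite -hK hq !intrM numqE; ring.
    rewrite hy' in hB1 hB2.
    rewrite ltr_int in hB1.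
    have hq1 : B < q * numq y + 1 by rewrite -(ltr_int rat) intrD ?mulr1z; lra.
    clear -hB1 hq1; lia.
  have hds : part_row la s = d.-1.
    have hcd : (c < d)%N by clear -hB0; rewrite /B in hB0; lia.
    have := hyd ltac:(clear -hcd hc1; lia); clear -hsrow; lia.
  have hcol : part_col la c = r.
    rewrite /part_col; apply: col_count => //.
      by rewrite Hc.
    by rewrite Hc; exact Hrc.
  exists s, c; split.
    rewrite /in_part Hs1 hc1 hds /=; clear -hB0; rewrite /B in hB0; lia.
  exists t.+1; split => //; split => //; split.
    rewrite /hook_length hds hcol. rewrite -PoszM in HK. rewrite /A in hA; rewrite /B in hB0. clear -HK hA hB0; lia.
  rewrite /arm_length hds hfl /B. rewrite /B in hB0. clear -hB0; lia.
- have hK : (Negz t)%:~R = - (t.+1%:R : rat) by rewrite NegzE mulrNz.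
  rewrite hK in hBA hX0 hX1.
  have ht1 : (1:rat) <= t.+1%:R by rewrite ler1n.
  have hp : 1 <= (e%:R - y) * t.+1%:R by nra.
  have hA : (0:rat) < A%:~R by lra.
  rewrite ltr0z in hA.
  have hyt : 1 <= y * t.+1%:R by nra.
  have hB1: y * t.+1%:R - 1 < (- B)%:~R by rewrite intrN hBA; lra.
  have hB2: (- B)%:~R < y * t.+1%:R by rewrite intrN hBA; lra.
  have hB0 : 0 < - B by rewrite -(ltr0z rat); lra.
  have hfl : Num.floor (y * t.+1%:R) = - B.
    by apply: floor_eq; [ | rewrite intrD ?mulr1z]; lra.
  have hnd : ~~ (denq y %| Posz t.+1)%Z.
    apply/negP => /dvdzP [q hq].
    have hy' : y * t.+1%:R = (q * numq y)%:~R.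
      by rewrite -[t.+1%:R]/((Posz t.+1)%:~R) hq !intrM numqE; ring.
    rewrite hy' in hB1 hB2.
    rewrite ltr_int in hB2.
    have hq1 : q * numq y < - B + 1 by rewrite -(ltr_int rat) intrD ?mulr1z; lra.
    clear -hB2 hq1; lia.
  have hcol : part_col la d = s.-1.
    rewrite /part_col; apply: col_count => //.
    - rewrite /A in hA; clear -hA Hr1; lia.
    - by apply: hys; rewrite /A in hA; clear -hA Hr1; lia.
  exists r, d; split.
    rewrite /in_part Hr1 Hd1 -Hc /=; rewrite /B in hB0; clear -hB0; lia.
  exists t.+1; split => //; split => //; split.
    rewrite /hook_length hcol -Hc. rewrite NegzE mulNr -PoszM in HK. rewrite /A in hA; rewrite /B in hB0. clear -HK hA hB0; lia.
  rewrite /arm_length hfl /B -Hc. rewrite /B in hB0. clear -hB0; lia.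
Qed.
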